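(* Let $p,q$ be positive integers with $p/q\ge2$, let $G$ be a connected graph with a fixed orientation, and let $f,g$ be two $(p,q)$-colourings of $G$. Then there is a sequence of $(p,q)$-colourings $f=f_0,f_1,\dots,f_n$, each obtained from its predecessor by a vertex set recolouring, such that for some constant $k$ we have $f_n(v)\equiv g(v)+k\pmod p$ for all vertices $v$, if and only if $\varphi_f(C)=\varphi_g(C)$ for every cycle $C$ of $G$.
   Context: A $(p,q)$-colouring of $G$ is a map $f:V(G)\to\{0,\dots,p-1\}$ with $q\le|f(u)-f(v)|\le p-q$ for every edge $uv$. For a fixed orientation $\overrightarrow{G}$, $\varphi_f(e)=f(v)-f(u)\bmod p$ for each arc $e=\overrightarrow{uv}$. For a cycle $C$ with a chosen traversal direction, with $C^+$ the edges oriented along the traversal and $C^-$ the others, $\varphi_f(C)=\sum_{e\in C^+}\varphi_f(e)+\sum_{e\in C^-}(p-\varphi_f(e))$ (in $\mathbb{Z}$). For $\emptyset\ne X\subsetneq V(G)$ let $\partial^+(X)$ (resp. $\partial^-(X)$) be the arcs from $X$ to $V(G)\setminus X$ (resp. from $V(G)\setminus X$ to $X$). A vertex set recolouring of $f$ (recolouring $X$ by $\alpha$), for $\emptyset\neq X\subsetneq V(G)$ and an integer $1\le\alpha\le p-1$ with $\varphi_f(e)\ge q+\alpha$ for all $e\in\partial^+(X)$ and $\varphi_f(e)\le p-q-\alpha$ for all $e\in\partial^-(X)$, produces the colouring $f'$ with $f'(v)=f(v)+\alpha\bmod p$ for $v\in X$ and $f'(v)=f(v)$ otherwise. *)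

(* Defs.v *)
From mathcomp Require Import all_boot.
Set Implicit Arguments. Unset Strict Implicit. Unset Printing Implicit Defensive.

Section PQ.
Variables (V : finType) (p q : nat).

Definition distn (a b : nat) : nat := maxn a b - minn a b.

Definition is_pq_col (e : rel V) (f : V -> nat) : Prop :=
  (forall v, f v < p) /\
  (forall u v, e u v -> q <= distn (f u) (f v) /\ distn (f u) (f v) <= p - q).

(* phi_f(u->v) = f(v) - f(u) mod p, for an arc u -> v (f u < p) *)
Definition phiA (f : V -> nat) (u v : V) : nat := (f v + p - f u) %% p.

(* contribution of the traversal step x -> y of a cycle, orientation o:
   phi_f(e) if the arc is x -> y (e in C^+), p - phi_f(e) if it is y -> x (C^-) *)
Definition phi_step (o : rel V) (f : V -> nat) (x y : V) : nat :=
  if o x y then phiA f x y else p - phiA f y x.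

(* a cycle of G given as its cyclic sequence of distinct vertices,
   in the chosen traversal direction *)
Definition is_cycle (e : rel V) (c : seq V) : bool :=
  [&& uniq c, 2 < size c & cycle e c].

Definition phiC (o : rel V) (f : V -> nat) (c : seq V) : nat :=
  \sum_(xy <- zip c (rot 1 c)) phi_step o f xy.1 xy.2.

Definition vs_recolouring (o : rel V) (f f' : V -> nat) : Prop :=
  exists (X : {set V}) (alpha : nat),
    [/\ X != set0, X != setT & 1 <= alpha <= p.-1] /\
    [/\ (forall u v, o u v -> u \in X -> v \notin X -> q + alpha <= phiA f u v),
     (forall u v, o u v -> u \notin X -> v \in X -> phiA f u v + q + alpha <= p) &
     (forall v, f' v = if v \in X then (f v + alpha) %% p else f v)].

End PQ.

(* Main.v *)
Require Import Defs.
From mathcomp Require Import all_boot all_order all_algebra zify.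
Set Implicit Arguments. Unset Strict Implicit. Unset Printing Implicit Defensive.
Import Order.TTheory GRing.Theory Num.Theory.

Section Arith.
Variable p : nat.
Hypothesis pp : 0 < p.

Lemma phiA_char a b r : a < p -> r < p -> r + a = b %[mod p] -> (b + p - a) %% p = r.
Proof.
move=> ha hr h; rewrite -(modn_small hr); apply/eqP; rewrite -(eqn_modDr a).
have ->: b + p - a + a = b + p by lia.
by rewrite modnDr h.
Qed.

Lemma phiA_cong a b : a < p -> (b + p - a) %% p + a = b %[mod p].
Proof.
move=> ha; rewrite modnDml.
have ->: b + p - a + a = b + p by lia.
by rewrite modnDr.
Qed.

Lemma modfwd a b c d k : b < p -> d < p -> (a + p - b) %% p = (c + p - d) %% p ->
  b = d + k %[mod p] -> a = c + k %[mod p].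
Proof.
move=> hb hd H Hb; rewrite -(modnDr a p) (_ : a + p = (a + p - b) + b); last by lia.
rewrite -modnDm H Hb modnDm (_ : c + p - d + (d + k) = (c + k) + p); last by lia.
by rewrite modnDr.
Qed.

Lemma modbwd a b c d k : a < p -> c < p -> (b + p - a) %% p = (d + p - c) %% p ->
  b = d + k %[mod p] -> a = c + k %[mod p].
Proof.
move=> ha hc H Hb; apply/eqP; rewrite -(eqn_modDl (d + p - c)).
rewrite -modnDml -H modnDml (_ : b + p - a + a = b + p); last by lia.
rewrite modnDr Hb (_ : d + p - c + (c + k) = (d + k) + p); last by lia.
by rewrite modnDr.
Qed.

Lemma dist_phi q a b : a < p -> b < p -> 0 < q ->
  (q <= distn a b <= p - q) = (q <= (b + p - a) %% p <= p - q).
Proof.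
move=> ha hb hq; rewrite /distn; case: (leqP a b) => hab.
  rewrite (_ : b + p - a = (b - a) + p); last by lia.
  rewrite modnDr modn_small; last by lia.
  by apply/idP/idP => /andP[h1 h2]; apply/andP; split; lia.
rewrite modn_small; last by lia.
by apply/idP/idP => /andP[h1 h2]; apply/andP; split; lia.
Qed.

End Arith.

Section Graph.
Variables (V : finType) (e o : rel V) (p q : nat).
Hypotheses (hq : 0 < q) (hpq : 2 * q <= p).
Hypotheses (e_sym : symmetric e) (e_irr : irreflexive e)
  (o_edge : forall u v, e u v = o u v || o v u)
  (o_anti : forall u v, ~~ (o u v && o v u)).

Let pp : 0 < p. Proof. lia. Qed.

Lemma phiA_lt (F : V -> nat) (u v : V) : phiA p F u v < p.
Proof. by rewrite /phiA ltn_pmod. Qed.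

Lemma col_arc (F : V -> nat) (u v : V) : is_pq_col p q e F -> o u v -> q <= phiA p F u v <= p - q.
Proof.
case=> hlt hE huv; have /hE [h1 h2] : e u v by rewrite o_edge huv.
by rewrite /phiA -dist_phi // h1 h2.
Qed.

Lemma distnC a b : distn a b = distn b a.
Proof. by rewrite /distn maxnC minnC. Qed.

Lemma arc_col (F : V -> nat) : (forall v, F v < p) ->
  (forall u v, o u v -> q <= phiA p F u v <= p - q) -> is_pq_col p q e F.
Proof.
move=> hlt H; split=> // u v; rewrite o_edge => /orP[] h.
  by have := H u v h; rewrite /phiA -dist_phi // => /andP.
by have := H v u h; rewrite /phiA -dist_phi // distnC => /andP.
Qed.

Lemma arc_recol (F F' : V -> nat) (X : {set V}) (al : nat) u v :
  (forall w, F w < p) ->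
  (forall u v, o u v -> u \in X -> v \notin X -> q + al <= phiA p F u v) ->
  (forall u v, o u v -> u \notin X -> v \in X -> phiA p F u v + q + al <= p) ->
  (forall w, F' w = if w \in X then (F w + al) %% p else F w) ->
  o u v -> phiA p F' u v + al * (u \in X) = phiA p F u v + al * (v \in X).
Proof.
move=> hlt C1 C2 hF' huv.
have H := phiA_cong pp (F v) (hlt u).
rewrite /phiA in C1 C2.
rewrite /phiA !hF'.
case hu: (u \in X); case hv: (v \in X); rewrite ?muln0 ?muln1 ?addn0.
- congr (_ + _); apply: phiA_char => //; try exact: ltn_pmod.
  by rewrite modnDmr modn_mod addnA -modnDml H modnDml.
- have h1 := C1 u v huv hu (negbT hv).
  have ->: (F v + p - (F u + al) %% p) %% p = (F v + p - F u) %% p - al.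
    apply: phiA_char => //; try exact: ltn_pmod.
      have := ltn_pmod (F v + p - F u) pp; lia.
    rewrite modnDmr (_ : (F v + p - F u) %% p - al + (F u + al) = (F v + p - F u) %% p + F u); last by lia.
    by [].
  lia.
- have h1 := C2 u v huv (negbT hu) hv.
  have l := ltn_pmod (F v + p - F u) pp.
  apply: phiA_char => //; first by lia.
  by rewrite addnAC -modnDml H modnDml modn_mod.
- by [].
Qed.

Lemma step_recol (F F' : V -> nat) (X : {set V}) (al : nat) x y :
  (forall w, F w < p) ->
  (forall u v, o u v -> u \in X -> v \notin X -> q + al <= phiA p F u v) ->
  (forall u v, o u v -> u \notin X -> v \in X -> phiA p F u v + q + al <= p) ->
  (forall w, F' w = if w \in X then (F w + al) %% p else F w) ->
  e x y -> phi_step p o F' x y + al * (x \in X) = phi_step p o F x y + al * (y \in X).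
Proof.
move=> hlt C1 C2 hF' hxy; rewrite /phi_step.
case: ifP => hoxy; first exact: arc_recol.
have hoyx : o y x by move: hxy; rewrite o_edge hoxy.
have E := arc_recol hlt C1 C2 hF' hoyx.
have l1 := phiA_lt F' y x; have l2 := phiA_lt F y x.
by move: E; case: (x \in X); case: (y \in X); rewrite ?muln0 ?muln1 => E; lia.
Qed.

End Graph.


Lemma zip_rc (T : Type) (x : T) u z : zip (x :: u) (rcons u z) = zip (x :: rcons u z) (rcons u z).
Proof. by elim: u x => [|y u IH] x //=; rewrite IH. Qed.

Lemma last_take' (T : Type) (x : T) s i : i <= size s -> last x (take i s) = nth x (x :: s) i.
Proof.
elim: s x i => [|y s IH] x [|i] //= hi.
by rewrite IH // (set_nth_default x) //=; lia.
Qed.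

Lemma phiA_ltp (V : finType) p (F : V -> nat) u v : (0 < p)%N -> (phiA p F u v < p)%N.
Proof. by move=> pp; rewrite /phiA ltn_pmod. Qed.

Section Walk.
Variables (V : finType) (e o : rel V) (p q : nat).
Hypotheses (hq : 0 < q) (hpq : 2 * q <= p).
Hypotheses (e_sym : symmetric e) (e_irr : irreflexive e)
  (e_conn : forall u v, connect e u v)
  (o_edge : forall u v, e u v = o u v || o v u)
  (o_anti : forall u v, ~~ (o u v && o v u)).
Variables (f g : V -> nat).
Hypothesis hcyc : forall c : seq V, is_cycle e c -> phiC p o f c = phiC p o g c.

Local Open Scope ring_scope.

Definition d (x y : V) : int := (phi_step p o f x y)%:Z - (phi_step p o g x y)%:Z.

Fixpoint PS (x : V) (s : seq V) : int := if s is y :: s' then d x y + PS y s' else 0.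

Lemma PS_cat x s1 s2 : PS x (s1 ++ s2) = PS x s1 + PS (last x s1) s2.
Proof. by elim: s1 x => [|y s IH] x /=; rewrite ?add0r // IH addrA. Qed.

Lemma d_anti x y : e x y -> d x y + d y x = 0.
Proof.
have pp : (0 < p)%N by lia.
rewrite /d /phi_step; have := o_anti x y; rewrite o_edge.
have := phiA_ltp f x y pp; have := phiA_ltp f y x pp.
have := phiA_ltp g x y pp; have := phiA_ltp g y x pp.
by case: (o x y); case: (o y x) => //= a1 a2 a3 a4 a5 a6; lia.
Qed.

Lemma PS_zip x u z : PS x (rcons u z) = \sum_(xy <- zip (x :: u) (rcons u z)) d xy.1 xy.2.
Proof.
elim: u x => [|y u IH] x /=; first by rewrite big_cons big_nil.
by rewrite IH big_cons.
Qed.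

Lemma phiC_d c : (phiC p o f c)%:Z - (phiC p o g c)%:Z = \sum_(xy <- zip c (rot 1 c)) d xy.1 xy.2.
Proof.
rewrite /phiC /d sumrB.
by rewrite !(big_morph Posz PoszD (erefl _)).
Qed.

Lemma closed0 n : forall x s, (size s <= n)%N -> path e x s -> last x s = x -> PS x s = 0.
Proof.
elim: n => [|n IH] x s.
  by case: s.
case/lastP: s => [|u z] // hs hp hl.
rewrite last_rcons in hl; subst z.
case: (boolP (uniq (x :: u))) => hu.
  case: u hs hp hu => [|y [|y' u']] hs hp hu.
  - by move: hp => /=; rewrite e_irr.
  - move: hp => /= /andP[hxy _]; rewrite addr0; exact: d_anti.
  - rewrite PS_zip -rot1_cons -phiC_d hcyc ?subrr //.
    by rewrite /is_cycle hu /=.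
case/(uniqPn x): hu => i [j [hij hj hn]].
set s := rcons u x.
have hsz : size s = size (x :: u) by rewrite size_rcons.
have hw : forall k, (k < size (x :: u))%N -> nth x (x :: s) k = nth x (x :: u) k.
  by move=> k hk; rewrite /s -rcons_cons nth_rcons hk.
have hlx : last x s = x by rewrite /s last_rcons.
have hps : path e x s by [].
clearbody s.
set s1 := take i s; set s2 := take (j - i) (drop i s); set s3 := drop j s.
have hs12 : s1 ++ s2 = take j s by rewrite /s1 /s2 -takeD; congr take; lia.
have hS : s = (s1 ++ s2) ++ s3 by rewrite hs12 cat_take_drop.
set y := last x s1.
have hi : (i < size (x :: u))%N := ltn_trans hij hj.
have hy1 : y = nth x (x :: u) i.
  rewrite /y /s1 last_take'; last by rewrite hsz ltnW.
  by rewrite hw.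
have hy2 : last y s2 = y.
  rewrite /y -last_cat hs12 last_take'; last by rewrite hsz ltnW.
  by rewrite hw // -hn -hy1.
move: hps; rewrite hS !cat_path last_cat -/y hy2 => /andP[/andP[hp1 hp2] hp3].
have hl3 : last y s3 = x.
  by move: hlx; rewrite hS !last_cat -/y hy2 => ->.
have hsize : (size s <= n.+1)%N by rewrite hsz /= -(size_rcons u x).
have hj' : (j < size s)%N by rewrite hsz.
clear hj hi hw hsz hn.
have E1 : PS y s2 = 0.
  apply: IH => //; rewrite /s2 size_take size_drop; case: ltnP => ?; lia.
have E2 : PS x (s1 ++ s3) = 0.
  apply: IH.
  - rewrite size_cat /s1 /s3 size_take size_drop; case: ltnP => ?; lia.
  - by rewrite cat_path hp1 -/y hp3.
  - by rewrite last_cat -/y hl3.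
move: E2; rewrite !PS_cat !last_cat -/y hy2 E1 addr0 => ->.
by [].
Qed.

Lemma PS_end x s1 s2 : path e x s1 -> path e x s2 -> last x s1 = last x s2 -> PS x s1 = PS x s2.
Proof.
move=> h1 h2 hl.
case/connectP: (e_conn (last x s1) x) => t ht hx.
have E1 : PS x (s1 ++ t) = 0.
  apply: (@closed0 _ x (s1 ++ t) (leqnn _)).
    by rewrite cat_path h1 ht.
  by rewrite last_cat -hx.
have E2 : PS x (s2 ++ t) = 0.
  apply: (@closed0 _ x (s2 ++ t) (leqnn _)).
    by rewrite cat_path h2 -hl ht.
  by rewrite last_cat -hl -hx.
move: E1 E2; rewrite !PS_cat -hl => E1 E2; lia.
Qed.

Variable r : V.

Lemma exw v : exists s : seq V, path e r s && (last r s == v).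
Proof. by case/connectP: (e_conn r v) => s hs ->; exists s; rewrite hs eqxx. Qed.

Definition hpot v := PS r (xchoose (exw v)).

Lemma hpot_edge u v : e u v -> hpot v - hpot u = d u v.
Proof.
move=> huv; rewrite /hpot.
case/andP: (xchooseP (exw u)) => pu /eqP lu.
case/andP: (xchooseP (exw v)) => pv /eqP lv.
rewrite (@PS_end r (xchoose (exw v)) (rcons (xchoose (exw u)) v)) //.
- rewrite -cats1 PS_cat lu /= addr0; lia.
- by rewrite rcons_path pu lu huv.
- by rewrite last_rcons lv.
Qed.

End Walk.


Section Iter.
Variables (V : finType) (e o : rel V) (p q : nat).
Hypotheses (hq : 0 < q) (hpq : 2 * q <= p).
Hypotheses (e_sym : symmetric e) (e_irr : irreflexive e)
  (e_conn : forall u v, connect e u v)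
  (o_edge : forall u v, e u v = o u v || o v u)
  (o_anti : forall u v, ~~ (o u v && o v u)).
Variable g : V -> nat.
Hypothesis hg : is_pq_col p q e g.

Let pp : 0 < p. Proof. lia. Qed.

Definition relh (F : V -> nat) (h : V -> int) :=
  forall u v, e u v -> ((phi_step p o F u v)%:Z - (phi_step p o g u v)%:Z = h v - h u)%R.

Lemma const_done F h : is_pq_col p q e F -> relh F h -> (forall u v, h u = h v) ->
  exists k, forall v, F v = g v + k %[mod p].
Proof.
move=> hF hrel hc.
case: (pickP (fun _ : V => true)) => [r _|hV]; last by exists 0 => v; have := hV v.
have hFlt := hF.1; have hglt := hg.1.
have base : F r = g r + (F r + (p - g r)) %[mod p].
  have -> : g r + (F r + (p - g r)) = F r + p by have := hglt r; lia.
  by rewrite modnDr.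
move: (F r + (p - g r)) base => k base.
exists k => v; case/connectP: (e_conn r v) => s hs ->.
elim: s r base hs => [|y s IH] x bx //= /andP[hxy hs].
apply: IH => //.
have E : phi_step p o F x y = phi_step p o g x y.
  by have := hrel x y hxy; rewrite (hc y x); lia.
move: E; rewrite /phi_step; case: ifP => hoxy E.
  by apply: (modfwd pp (hFlt x) (hglt x) E bx).
have E' : phiA p F y x = phiA p g y x.
  have := phiA_ltp F y x pp; have := phiA_ltp g y x pp; lia.
by apply: (modbwd pp (hFlt y) (hglt y) E' bx).
Qed.

Definition reach (F : V -> nat) := exists (n : nat) (fs : nat -> V -> nat),
      [/\ fs 0 = F,
          (forall i, i < n -> is_pq_col p q e (fs i.+1) /\
                              vs_recolouring p q o (fs i) (fs i.+1)) &
          exists k : nat, forall v, fs n v = g v + k %[mod p]].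

Lemma step_exists F h (K : int) : is_pq_col p q e F -> relh F h -> (forall v, (h v <= K)%R) ->
  ~~ [forall a, forall b, h a == h b] ->
  exists F' h', [/\ is_pq_col p q e F', vs_recolouring p q o F F', relh F' h',
     (forall v, (h' v <= K)%R) &
     (\sum_(v : V) absz (K - h' v)%R < \sum_(v : V) absz (K - h v)%R)%N].
Proof.
move=> hF hrel hK hnc.
have [u [v huv]] : exists u v, (h u < h v)%R.
  case/forallPn: hnc => a /forallPn [b hab].
  case: (ltgtP (h a) (h b)) => [H|H|H].
  - by exists a, b.
  - by exists b, a.
  - by move: hab; rewrite H eqxx.
set X := [set w | (h w <= h u)%R].
set F' := fun w => if w \in X then (F w + 1) %% p else F w.
set h' := fun w => (h w + (w \in X)%:Z)%R.
have hFlt := hF.1.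
have C1 : forall a b, o a b -> a \in X -> b \notin X -> q + 1 <= phiA p F a b.
  move=> a b hab; rewrite !inE => ha hb.
  have := hrel a b; rewrite o_edge hab /= /phi_step hab => /(_ isT) E.
  have := col_arc hq hpq o_edge hg hab => /andP[g1 g2].
  lia.
have C2 : forall a b, o a b -> a \notin X -> b \in X -> phiA p F a b + q + 1 <= p.
  move=> a b hab; rewrite !inE => ha hb.
  have := hrel a b; rewrite o_edge hab /= /phi_step hab => /(_ isT) E.
  have := col_arc hq hpq o_edge hg hab => /andP[g1 g2].
  lia.
have hF' : forall w, F' w = if w \in X then (F w + 1) %% p else F w by [].
exists F', h'; split.
- apply: (arc_col hq hpq o_edge).
    by move=> w; rewrite /F'; case: ifP => _; rewrite ?ltn_pmod.
  move=> a b hab.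
  have E := arc_recol hq hpq hFlt C1 C2 hF' hab.
  have := col_arc hq hpq o_edge hF hab => /andP[f1 f2].
  move: E (C1 a b hab) (C2 a b hab); case: (a \in X); case: (b \in X);
    rewrite ?muln0 ?muln1 => E c1 c2.
  + by apply/andP; split; lia.
  + have := c1 isT isT; move=> c; apply/andP; split; lia.
  + have := c2 isT isT; move=> c; apply/andP; split; lia.
  + by apply/andP; split; lia.
- exists X, 1; split.
    split.
    + by apply/set0Pn; exists u; rewrite inE.
    + apply/negP => /eqP hX.
      have : v \in X by rewrite hX inE.
      by rewrite inE; lia.
    + by apply/andP; split => //; lia.
  by split.
- move=> a b hab.
  have E := step_recol hq hpq o_edge hFlt C1 C2 hF' hab.
  have := hrel a b hab; rewrite /h'.
  by move: E; case: (a \in X); case: (b \in X); rewrite ?muln0 ?muln1 => E H; lia.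
- move=> w; rewrite /h'; case: (boolP (w \in X)); rewrite inE => H; have := hK w; have := hK v; lia.
- rewrite (bigD1 u) //= [X in (_ < X)%N](bigD1 u) //=.
  have hu : u \in X by rewrite inE.
  have L : (\sum_(i | i != u) absz (K - h' i)%R <= \sum_(i | i != u) absz (K - h i)%R)%N.
    apply: leq_sum => w _; rewrite /h'.
    case: (boolP (w \in X)); rewrite inE => H; have := hK w; have := hK v; lia.
  have := hK u; have := hK v; move: L; rewrite /h' hu /=; lia.
Qed.

Lemma iterate (K : int) N : forall F h, is_pq_col p q e F -> relh F h ->
  (forall v, (h v <= K)%R) -> (\sum_(v : V) absz (K - h v)%R <= N)%N -> reach F.
Proof.
elim: N => [|N IH] F h hF hrel hK hN;
  (case: (boolP [forall a, forall b, h a == h b]) => hc;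
    [ idtac | have [F' [h' [hF' hr hrel' hK' hlt]]] := step_exists hF hrel hK hc ]).
- have [k hk] : exists k, forall v, F v = g v + k %[mod p].
    apply: (const_done hF hrel) => a b.
    by move/forallP: hc => /(_ a) /forallP /(_ b) /eqP.
  by exists 0, (fun _ => F); split => //; exists k.
- lia.
- have [k hk] : exists k, forall v, F v = g v + k %[mod p].
    apply: (const_done hF hrel) => a b.
    by move/forallP: hc => /(_ a) /forallP /(_ b) /eqP.
  by exists 0, (fun _ => F); split => //; exists k.
- have [n [fs [h0 hst hend]]] := IH F' h' hF' hrel' hK' (ltac:(lia)).
  exists n.+1, (fun i => if i is j.+1 then fs j else F); split => //.
  case=> [_|i hi] /=; first by rewrite h0.
  exact: hst.
Qed.

End Iter.


Lemma sum_zip1 (T U : Type) (F : T -> nat) (s : seq T) (t : seq U) :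
  size s <= size t -> \sum_(xy <- zip s t) F xy.1 = \sum_(x <- s) F x.
Proof.
elim: s t => [|x s IH] [|y t] //=.
- by rewrite !big_nil.
- by rewrite !big_nil.
- by move=> h; rewrite !big_cons IH.
Qed.

Lemma sum_zip2 (T U : Type) (F : U -> nat) (s : seq T) (t : seq U) :
  size t <= size s -> \sum_(xy <- zip s t) F xy.2 = \sum_(x <- t) F x.
Proof.
elim: s t => [|x s IH] [|y t] //=; try by rewrite !big_nil.
by move=> h; rewrite !big_cons IH.
Qed.

Section Final.
Variables (V : finType) (e o : rel V) (p q : nat).
Hypotheses (hq : 0 < q) (hpq : 2 * q <= p)
  (o_edge : forall u v, e u v = o u v || o v u).

Lemma cycle_pairs (c : seq V) : cycle e c -> forall xy, xy \in zip c (rot 1 c) -> e xy.1 xy.2.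
Proof.
case: c => [|x u] //= hcy.
rewrite rot1_cons zip_rc.
move: (rcons u x) hcy => s0; elim: s0 x => [|y s IH] x0 //= /andP[h1 h2] xy.
by rewrite inE => /orP[/eqP -> //|]; exact: IH.
Qed.

Lemma recol_inv (F F' : V -> nat) (c : seq V) : (forall w, F w < p) ->
  vs_recolouring p q o F F' -> is_cycle e c -> phiC p o F' c = phiC p o F c.
Proof.
move=> hlt [X [al [[_ _ _] [C1 C2 hF']]]] hc.
have hpairs : forall xy, xy \in zip c (rot 1 c) -> e xy.1 xy.2.
  by case/and3P: hc => _ _; exact: cycle_pairs.
have E : \sum_(xy <- zip c (rot 1 c)) (phi_step p o F' xy.1 xy.2 + al * (xy.1 \in X))
       = \sum_(xy <- zip c (rot 1 c)) (phi_step p o F xy.1 xy.2 + al * (xy.2 \in X)).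
  apply: eq_big_seq => xy hxy.
  exact: (step_recol hq hpq o_edge hlt C1 C2 hF' (hpairs xy hxy)).
move: E; rewrite !big_split /= -!big_distrr /=.
rewrite (sum_zip1 (fun x => nat_of_bool (x \in X))) ?size_rot //.
rewrite (sum_zip2 (fun x => nat_of_bool (x \in X))) ?size_rot //.
have Hp : perm_eq (rot 1 c) c by rewrite (perm_rot 1 c).
rewrite (perm_big _ Hp) /=.
by move/eqP; rewrite eqn_add2r => /eqP.
Qed.

Lemma shift_phiC (F g : V -> nat) c k : (forall w, F w < p) -> (forall w, g w < p) ->
  (forall v, F v = g v + k %[mod p]) -> phiC p o F c = phiC p o g c.
Proof.
move=> hF hg hk; have pp : 0 < p by lia.
suff E : forall u v, phiA p F u v = phiA p g u v.
  by rewrite /phiC; apply: eq_bigr => xy _; rewrite /phi_step !E.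
move=> u v; rewrite /phiA.
apply: (phiA_char pp (hF u)); first exact: ltn_pmod.
rewrite -modnDmr (hk u) modnDmr addnA -modnDml (phiA_cong pp (g v) (hg u)) modnDml.
by rewrite -(hk v).
Qed.

End Final.

Theorem corollary2p5 (V : finType) (e o : rel V) (p q : nat)
  (hq : 0 < q) (hpq : 2 * q <= p)
  (e_sym : symmetric e) (e_irr : irreflexive e)
  (e_conn : forall u v, connect e u v)
  (o_edge : forall u v, e u v = o u v || o v u)
  (o_anti : forall u v, ~~ (o u v && o v u))
  (f g : V -> nat) (hf : is_pq_col p q e f) (hg : is_pq_col p q e g) :
  (exists (n : nat) (fs : nat -> V -> nat),
      [/\ fs 0 = f,
          (forall i, i < n -> is_pq_col p q e (fs i.+1) /\
                              vs_recolouring p q o (fs i) (fs i.+1)) &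
          exists k : nat, forall v, fs n v = g v + k %[mod p]])
  <->
  (forall c : seq V, is_cycle e c -> phiC p o f c = phiC p o g c).
Proof.
have pp : 0 < p by lia.
split.
- case=> n [fs [h0 hst [k hk]]] c hc.
  have inv : forall i, i <= n -> is_pq_col p q e (fs i) /\ phiC p o (fs i) c = phiC p o f c.
    elim=> [|i IH] hi; first by rewrite h0.
    have [hcol hrec] := hst i hi.
    have [hc' E] := IH (ltnW hi).
    split => //; rewrite -E; exact: (recol_inv hq hpq o_edge hc'.1 hrec hc).
  have [hcn En] := inv n (leqnn n).
  by rewrite -En (shift_phiC o hq hpq c hcn.1 hg.1 hk).
- move=> hcyc.
  case: (pickP (fun _ : V => true)) => [r _|hV]; last first.
    by exists 0, (fun _ => f); split => //; exists 0 => v; have := hV v.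
  set h := hpot o p e_conn f g r.
  have hedge : forall u v, e u v -> (h v - h u = d o p f g u v)%R.
    by move=> u v huv; exact: (hpot_edge hq hpq e_irr e_conn o_edge o_anti hcyc r huv).
  set K : int := Posz (\sum_(w : V) absz (h w)).
  apply: (@iterate V e o p q hq hpq e_conn o_edge g hg K _ f h hf).
  + by move=> u v huv; rewrite hedge.
  + move=> v; have H : (absz (h v) <= \sum_(w : V) absz (h w))%N.
      by rewrite (bigD1 v) //= leq_addr.
    rewrite /K; lia.
  + exact: leqnn.
Qed.
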